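(* Let $A\in\mathbb{C}^{n\times n}$ be stable, $B\in\mathbb{C}^{n\times r}$, and $(A,B)$ controllable. Let $X$ solve $AX+XA^*=-BB^*$ with singular values $s_1\ge\cdots\ge s_n>0$. Then the numerical abscissa of $A$ satisfies $$-\frac{\|B\|^2}{2s_1}\;\le\;\omega(A)\;\le\;\frac{s_1-s_n}{s_1+s_n}\,\|A\|.$$
   Context: $\|\cdot\|$ is the vector 2-norm and induced spectral norm. $(A,B)$ controllable means $\operatorname{rank}[B\ AB\ \cdots\ A^{n-1}B]=n$; stability means all eigenvalues of $A$ lie in the open left half-plane. The numerical abscissa is $\omega(A)=\max\{\operatorname{Re} z: z\in W(A)\}$, where $W(A)=\{x^*Ax: x\in\mathbb{C}^n,\|x\|=1\}$ is the numerical range; equivalently $\omega(A)$ is the largest eigenvalue of $\tfrac12(A+A^* )$. *)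

(* Defs.v *)
(* Complex matrices are modelled over an arbitrary
   numClosedFieldType C (e.g. algC), with conjugation conjC, real part 'Re,
   modulus `|_| and square root sqrtC. *)
From HB Require Import structures.
From mathcomp Require Import all_boot all_order all_algebra.
Set Implicit Arguments. Unset Strict Implicit. Unset Printing Implicit Defensive.
Import Order.TTheory GRing.Theory Num.Theory.
Local Open Scope ring_scope.

Definition adjmx (C : numClosedFieldType) m n (M : 'M[C]_(m, n)) : 'M[C]_(n, m) :=
  \matrix_(i, j) (M j i)^*.

Definition vnorm (C : numClosedFieldType) n (x : 'cV[C]_n) : C :=
  sqrtC (\sum_i `|x i 0| ^+ 2).

Definition is_opnorm (C : numClosedFieldType) m n (M : 'M[C]_(m, n)) (s : C) : Prop :=
  0 <= s /\
  (forall x : 'cV[C]_n, vnorm (M *m x) <= s * vnorm x) /\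
  (forall t : C, 0 <= t -> (forall x : 'cV[C]_n, vnorm (M *m x) <= t * vnorm x) -> s <= t).

Definition is_num_abscissa (C : numClosedFieldType) n (A : 'M[C]_n) (w : C) : Prop :=
  (forall x : 'cV[C]_n, vnorm x = 1 -> 'Re ((adjmx x *m A *m x) 0 0) <= w) /\
  (exists2 x : 'cV[C]_n, vnorm x = 1 & 'Re ((adjmx x *m A *m x) 0 0) = w).

Definition stable (C : numClosedFieldType) n (A : 'M[C]_n) : Prop :=
  forall z : C, eigenvalue A z -> 'Re z < 0.

Definition controllable (C : numClosedFieldType) n r (A : 'M[C]_n) (B : 'M[C]_(n, r)) : Prop :=
  \rank (\mxrow_(k < n) (A ^+ k *m B)) = n.

Definition singular_value (C : numClosedFieldType) m n (M : 'M[C]_(m, n)) (s : C) : Prop :=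
  0 <= s /\ eigenvalue (adjmx M *m M) (s ^+ 2).

(* Main.v *)
Require Import Defs.
From HB Require Import structures.
From mathcomp Require Import all_boot all_order all_algebra.
From mathcomp Require Import sesquilinear spectral ring.
Import Order.TTheory GRing.Theory Num.Theory.
Local Open Scope ring_scope.
Set Implicit Arguments. Unset Strict Implicit. Unset Printing Implicit Defensive.


Lemma adjmxM (C : numClosedFieldType) m n p (A : 'M[C]_(m,n)) (B : 'M[C]_(n,p)) :
  adjmx (A *m B) = adjmx B *m adjmx A.
Proof.
apply/matrixP=> i j; rewrite !mxE rmorph_sum; apply: eq_bigr => k _.
by rewrite !mxE rmorphM mulrC.
Qed.

Lemma adjmxK (C : numClosedFieldType) m n (A : 'M[C]_(m,n)) : adjmx (adjmx A) = A.
Proof. by apply/matrixP=> i j; rewrite !mxE conjCK. Qed.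

Lemma adjmxD (C : numClosedFieldType) m n (A B : 'M[C]_(m,n)) :
  adjmx (A + B) = adjmx A + adjmx B.
Proof. by apply/matrixP=> i j; rewrite !mxE rmorphD. Qed.

Lemma adjmxN (C : numClosedFieldType) m n (A : 'M[C]_(m,n)) :
  adjmx (- A) = - adjmx A.
Proof. by apply/matrixP=> i j; rewrite !mxE rmorphN. Qed.

Lemma adjmxB (C : numClosedFieldType) m n (A B : 'M[C]_(m,n)) :
  adjmx (A - B) = adjmx A - adjmx B.
Proof. by rewrite adjmxD adjmxN. Qed.

Lemma adjmxZ (C : numClosedFieldType) m n (a : C) (A : 'M[C]_(m,n)) :
  adjmx (a *: A) = a^* *: adjmx A.
Proof. by apply/matrixP=> i j; rewrite !mxE rmorphM. Qed.

Lemma adjmx0 (C : numClosedFieldType) m n : adjmx (0 : 'M[C]_(m,n)) = 0.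
Proof. by apply/matrixP=> i j; rewrite !mxE rmorph0. Qed.

Lemma adjmx_scalar (C : numClosedFieldType) n (a : C) :
  adjmx (a%:M : 'M[C]_n) = a^*%:M.
Proof.
apply/matrixP=> i j; rewrite !mxE rmorphMn eq_sym //.
Qed.

Lemma adjmxE (C : numClosedFieldType) m n (A : 'M[C]_(m,n)) : adjmx A = (A ^t*)%sesqui.
Proof. by apply/matrixP=> i j; rewrite !mxE. Qed.

Definition cdot (C : numClosedFieldType) n (u v : 'cV[C]_n) : C := (adjmx u *m v) 0 0.

Lemma cdotE (C : numClosedFieldType) n (u v : 'cV[C]_n) :
  cdot u v = \sum_i (u i 0)^* * v i 0.
Proof. by rewrite /cdot mxE; apply: eq_bigr => i _; rewrite mxE. Qed.

Lemma cdotDl (C : numClosedFieldType) n (u v w : 'cV[C]_n) :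
  cdot (u + v) w = cdot u w + cdot v w.
Proof. by rewrite /cdot adjmxD mulmxDl mxE. Qed.
Lemma cdotDr (C : numClosedFieldType) n (u v w : 'cV[C]_n) :
  cdot w (u + v) = cdot w u + cdot w v.
Proof. by rewrite /cdot mulmxDr mxE. Qed.
Lemma cdotNl (C : numClosedFieldType) n (u w : 'cV[C]_n) :
  cdot (- u) w = - cdot u w.
Proof. by rewrite /cdot adjmxN mulNmx mxE. Qed.
Lemma cdotNr (C : numClosedFieldType) n (u w : 'cV[C]_n) :
  cdot w (- u) = - cdot w u.
Proof. by rewrite /cdot mulmxN mxE. Qed.
Lemma cdotZl (C : numClosedFieldType) n a (u w : 'cV[C]_n) :
  cdot (a *: u) w = a^* * cdot u w.
Proof. by rewrite /cdot adjmxZ -scalemxAl mxE. Qed.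
Lemma cdotZr (C : numClosedFieldType) n a (u w : 'cV[C]_n) :
  cdot w (a *: u) = a * cdot w u.
Proof. by rewrite /cdot -scalemxAr mxE. Qed.
Lemma cdotC (C : numClosedFieldType) n (u v : 'cV[C]_n) : (cdot u v)^* = cdot v u.
Proof.
rewrite !cdotE rmorph_sum; apply: eq_bigr => i _; by rewrite rmorphM /= conjCK mulrC.
Qed.
Lemma cdot_mull (C : numClosedFieldType) n m (M : 'M[C]_(m, n)) u v :
  cdot (M *m u) v = cdot u (adjmx M *m v).
Proof. by rewrite /cdot adjmxM mulmxA. Qed.
Lemma cdot_ge0 (C : numClosedFieldType) n (u : 'cV[C]_n) : 0 <= cdot u u.
Proof. by rewrite cdotE sumr_ge0 // => i _; rewrite mulrC mul_conjC_ge0. Qed.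
Lemma cdot_eq0 (C : numClosedFieldType) n (u : 'cV[C]_n) : cdot u u = 0 -> u = 0.
Proof.
rewrite cdotE => /eqP; rewrite psumr_eq0 => [/allP H|i _]; last first.
  by rewrite mulrC mul_conjC_ge0.
apply/matrixP=> i j; rewrite ord1 mxE.
have := H i (mem_index_enum _); rewrite mulrC mul_conjC_eq0 => /eqP //.
Qed.
Lemma vnorm_cdot (C : numClosedFieldType) n (u : 'cV[C]_n) : vnorm u ^+ 2 = cdot u u.
Proof.
rewrite /vnorm sqrtCK cdotE; apply: eq_bigr => i _.
by rewrite normCK mulrC.
Qed.
Lemma vnorm_ge0 (C : numClosedFieldType) n (u : 'cV[C]_n) : 0 <= vnorm u.
Proof. by rewrite /vnorm sqrtC_ge0 sumr_ge0 // => i _; rewrite exprn_ge0. Qed.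

Lemma cdot_dotmx (C : numClosedFieldType) n (u v : 'cV[C]_n) :
  cdot u v = dotmx (v^T) (u^T).
Proof.
rewrite dotmxE cdotE mxE; apply: eq_bigr => i _; rewrite !mxE mulrC //.
Qed.

Lemma cauchy_schwarz (C : numClosedFieldType) n (u v : 'cV[C]_n) :
  `|cdot u v| <= vnorm u * vnorm v.
Proof.
have H : `|cdot u v| <= sqrtC (cdot v v) * sqrtC (cdot u u).
  rewrite !cdot_dotmx; exact: (CauchySchwarz_sqrt (@dotmx C n) (v^T) (u^T)).1.
have E (w : 'cV[C]_n) : vnorm w = sqrtC (cdot w w).
  by rewrite /vnorm cdotE; congr sqrtC; apply: eq_bigr => i _; rewrite normCK mulrC.
by rewrite !E mulrC.
Qed.


Definition herm (C : numClosedFieldType) n (M : 'M[C]_n) := adjmx M = M.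
Definition psd (C : numClosedFieldType) n (M : 'M[C]_n) :=
  forall x : 'cV[C]_n, 0 <= cdot x (M *m x).

Lemma cdot_herm (C : numClosedFieldType) n (M : 'M[C]_n) u v :
  herm M -> cdot u (M *m v) = cdot (M *m u) v.
Proof. by move=> hM; rewrite cdot_mull hM. Qed.

Lemma psd_kernel (C : numClosedFieldType) n (M : 'M[C]_n) u :
  herm M -> psd M -> cdot u (M *m u) = 0 -> M *m u = 0.
Proof.
move=> hM pM u0.
set v := M *m u.
set a := cdot v v; set m := cdot v (M *m v).
have a0 : 0 <= a := cdot_ge0 v.
have m0 : 0 <= m := pM v.
suff : a = 0 by move/cdot_eq0.
apply/eqP; apply/negP => /negP an0.
have apos : 0 < a by rewrite lt_def an0 a0.
have m1pos : 0 < m + 1 by rewrite ltr_wpDl.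
pose s := a / (m + 1).
have spos : 0 < s by rewrite divr_gt0.
have := pM (u - s *: v).
rewrite mulmxBr -scalemxAr cdotDl cdotNl !cdotDr !cdotNr !cdotZl !cdotZr.
rewrite u0 [cdot u (M *m v)]cdot_herm // -/v -/a -/m.
have sr : s^* = s by apply/CrealP; rewrite gtr0_real.
rewrite sr.
have -> : 0 - s * a - (s * (cdot v v) - s * (s * m)) = - (a * a * (m + 2) / (m + 1) / (m + 1)).
  rewrite -/a /s; field; by rewrite gt_eqF.
rewrite oppr_ge0 => H.
have : 0 < a * a * (m + 2) / (m + 1) / (m + 1).
  by rewrite !divr_gt0 // ?mulr_gt0 // ltr_wpDl.
by move=> Hp; have := lt_le_trans Hp H; rewrite ltxx.
Qed.


Lemma herm_real (C : numClosedFieldType) n (Y : 'M[C]_n) u :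
  herm Y -> (cdot u (Y *m u))^* = cdot u (Y *m u).
Proof. by move=> hY; rewrite cdotC cdot_herm. Qed.

Lemma lyap_Ty (C : numClosedFieldType) n (T Y Q : 'M[C]_n) (u : 'cV[C]_n) (t : C) :
  herm Y -> T *m Y + Y *m adjmx T = - Q ->
  adjmx u *m T *m Y = t *: (adjmx u *m Y) ->
  T *m (Y *m u) = - (Q *m u) - t^* *: (Y *m u).
Proof.
move=> hY L F1.
have F2 : Y *m adjmx T *m u = t^* *: (Y *m u).
  have := congr1 (@adjmx _ _ _) F1.
  by rewrite !adjmxM adjmxZ adjmxM !adjmxK hY mulmxA.
have H := congr1 (mulmx^~ u) L; rewrite /= mulmxDl F2 mulNmx -mulmxA in H.
by rewrite -H addrK.
Qed.

Lemma lyap_eta (C : numClosedFieldType) n (T Y Q : 'M[C]_n) (u : 'cV[C]_n) (t : C) :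
  herm Y -> T *m Y + Y *m adjmx T = - Q ->
  adjmx u *m T *m Y = t *: (adjmx u *m Y) ->
  t * cdot u (Y *m u) = - cdot u (Q *m u) - t^* * cdot u (Y *m u).
Proof.
move=> hY L F1.
have E := lyap_Ty hY L F1.
have : cdot u (T *m (Y *m u)) = t * cdot u (Y *m u).
  by rewrite /cdot !mulmxA F1 -scalemxAl mxE.
by rewrite E cdotDr cdotNr cdotNr cdotZr => <-.
Qed.

Lemma lyap_defl (C : numClosedFieldType) n (T Y Q : 'M[C]_n) (u : 'cV[C]_n) (t : C) :
  herm Y -> herm Q -> T *m Y + Y *m adjmx T = - Q ->
  adjmx u *m T *m Y = t *: (adjmx u *m Y) ->
  cdot u (Y *m u) != 0 ->
  T *m (Y - (cdot u (Y *m u))^-1 *: ((Y *m u) *m adjmx (Y *m u)))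
  + (Y - (cdot u (Y *m u))^-1 *: ((Y *m u) *m adjmx (Y *m u))) *m adjmx T
  = - (adjmx (1%:M - (cdot u (Y *m u))^-1 *: (u *m adjmx (Y *m u))) *m Q
        *m (1%:M - (cdot u (Y *m u))^-1 *: (u *m adjmx (Y *m u)))).
Proof.
move=> hY hQ L F1 en0.
have Ety := lyap_Ty hY L F1.
have Eeta := lyap_eta hY L F1.
have er := herm_real u hY.
set y := Y *m u in Ety Eeta er en0 *.
set e := cdot u y in Ety Eeta er en0 *.
set q := Q *m u in Ety Eeta *.
set k := cdot u q in Eeta.
have Eyt : adjmx y *m adjmx T = - adjmx q - t *: adjmx y.
  by rewrite -adjmxM Ety adjmxB adjmxN adjmxZ conjCK.
have Euq : adjmx u *m Q = adjmx q by rewrite /q adjmxM hQ.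
have Euqu : adjmx u *m Q *m u = k%:M.
  by rewrite [LHS]mx11_scalar /k /cdot /q mulmxA.
have ei : (e^-1)^* = e^-1 by rewrite fmorphV /= er.
have LHS : T *m (Y - e^-1 *: (y *m adjmx y)) + (Y - e^-1 *: (y *m adjmx y)) *m adjmx T
   = - Q + e^-1 *: (q *m adjmx y + y *m adjmx q) + (e^-1 * (t + t^*)) *: (y *m adjmx y).
  rewrite mulmxBr mulmxBl -!scalemxAr -!scalemxAl.
  rewrite [T *m (y *m _)]mulmxA Ety -[(y *m adjmx y) *m adjmx T]mulmxA Eyt.
  rewrite addrACA L mulmxBl mulmxBr mulNmx mulmxN -!scalemxAl -!scalemxAr.
  rewrite -!addrA; congr (_ + _).
  set a := q *m adjmx y; set b := y *m adjmx q; set c := y *m adjmx y.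
  by apply/matrixP=> i j; rewrite !mxE; ring.
have RHS : adjmx (1%:M - e^-1 *: (u *m adjmx y)) *m Q *m (1%:M - e^-1 *: (u *m adjmx y))
   = Q - e^-1 *: (q *m adjmx y + y *m adjmx q) + (e^-1 * e^-1 * k) *: (y *m adjmx y).
  rewrite adjmxB adjmx_scalar conjC1 adjmxZ ei adjmxM adjmxK.
  rewrite mulmxBl mul1mx mulmxBr mulmx1 -!scalemxAl -!scalemxAr.
  rewrite mulmxBl -scalemxAl -[y *m adjmx u *m Q]mulmxA Euq [Q *m (u *m _)]mulmxA -/q.
  rewrite [_ *m (u *m adjmx y)]mulmxA -[y *m adjmx q *m u]mulmxA.
  have -> : adjmx q *m u = k%:M by rewrite -Euq Euqu.
  rewrite mul_mx_scalar -scalemxAl.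
  set a := q *m adjmx y; set b := y *m adjmx q; set c := y *m adjmx y.
  by apply/matrixP=> i j; rewrite !mxE; ring.
rewrite LHS RHS.
have Ek : k = - (t + t^*) * e.
  have -> : k = - (t * e) - t^* * e by rewrite Eeta; ring.
  ring.
rewrite Ek.
set a := q *m adjmx y; set b := y *m adjmx q; set c := y *m adjmx y.
apply/matrixP=> i j; rewrite !mxE; field; exact: en0.
Qed.


Lemma herm_entry (C : numClosedFieldType) n (Y : 'M[C]_n) i j :
  herm Y -> Y i j = (Y j i)^*.
Proof. by move=> hY; rewrite -{1}hY mxE. Qed.

Lemma adj_delta (C : numClosedFieldType) n (k : 'I_n) :
  adjmx (delta_mx k 0 : 'cV[C]_n) = delta_mx 0 k.
Proof. by apply/matrixP=> i j; rewrite !mxE rmorph_nat andbC. Qed.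

Lemma psd_congr (C : numClosedFieldType) n (Q M : 'M[C]_n) :
  psd Q -> psd (adjmx M *m Q *m M).
Proof. by move=> pQ x; rewrite -!mulmxA -cdot_mull pQ. Qed.

Lemma herm_congr (C : numClosedFieldType) n (Q M : 'M[C]_n) :
  herm Q -> herm (adjmx M *m Q *m M).
Proof. by move=> hQ; rewrite /herm !adjmxM adjmxK hQ mulmxA. Qed.

Lemma cdot_outer (C : numClosedFieldType) n (x y z : 'cV[C]_n) :
  cdot x ((y *m adjmx z) *m x) = cdot x y * cdot z x.
Proof.
rewrite -mulmxA [adjmx z *m x]mx11_scalar mul_mx_scalar cdotZr mulrC.
by rewrite /cdot.
Qed.

Lemma trig_shift_unit (C : numClosedFieldType) n (T : 'M[C]_n) (a : C) :
  is_trig_mx T -> (forall i, 'Re (T i i) < 0) -> 'Re a < 0 ->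
  T + a%:M \in unitmx.
Proof.
move=> tT sT sa.
have tTa : is_trig_mx (T + a%:M).
  apply/is_trig_mxP=> i j lij; rewrite !mxE (is_trig_mxP tT) // add0r.
  by rewrite (_ : (i == j) = false) //; apply/negbTE; apply: contraTneq lij => ->; rewrite ltnn.
rewrite unitmxE det_trig // unitfE; apply/prodf_neq0 => i _.
rewrite !mxE eqxx mulr1n; apply/eqP => H0.
have H1 := ltrD (sT i) sa; rewrite -raddfD /= H0 in H1.
have R0 : 'Re (0:C) = 0 by rewrite ReE conjC0 addr0 mul0r.
by move: H1; rewrite R0 addr0 ltxx.
Qed.

Lemma lyap_tri (C : numClosedFieldType) n (T : 'M[C]_n) :
  is_trig_mx T -> (forall i, 'Re (T i i) < 0) ->
  forall m k, (n <= k + m)%N -> forall Y Q : 'M[C]_n, herm Y -> herm Q -> psd Q ->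
  T *m Y + Y *m adjmx T = - Q ->
  (forall i j : 'I_n, (j < k)%N -> Y i j = 0) -> psd Y.
Proof.
move=> tT sT m; elim: m => [|m IH] k hk Y Q hY hQ pQ L Yk.
  have -> : Y = 0 by apply/matrixP=> i j; rewrite mxE Yk // (leq_trans (ltn_ord j)) // -(addn0 k).
  by move=> x; rewrite mul0mx /cdot mulmx0 mxE.
case: (ltnP k n) => [kn|nk]; last first.
  have -> : Y = 0 by apply/matrixP=> i j; rewrite mxE Yk // (leq_trans (ltn_ord j)).
  by move=> x; rewrite mul0mx /cdot mulmx0 mxE.
have hk' : (n <= k.+1 + m)%N by rewrite addSnnS.
pose kk := Ordinal kn.
pose u : 'cV[C]_n := delta_mx kk 0.
pose t := T kk kk.
have F1 : adjmx u *m T *m Y = t *: (adjmx u *m Y).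
  rewrite /u adj_delta -!rowE; apply/matrixP=> i l; rewrite !mxE.
  rewrite (bigD1 kk) //= big1 ?addr0 ?mxE // => j /negbTE jk; rewrite !mxE.
  case: (ltngtP j kk) => [jlt|jgt|/val_inj jeq]; last by rewrite jeq eqxx in jk.
    by rewrite (herm_entry _ _ hY) Yk // conjC0 mulr0.
  by rewrite (is_trig_mxP tT) // mul0r.
have Ety := lyap_Ty hY L F1.
have Eeta := lyap_eta hY L F1.
have er := herm_real u hY.
have ycol : forall i, (Y *m u) i 0 = Y i kk.
  by move=> i; rewrite /u -colE mxE.
have st : 'Re t < 0 := sT kk.
have tt : t + t^* = 'Re t *+ 2.
  by rewrite ReE -mulr_natr mulfVK // pnatr_eq0.
have kge : 0 <= cdot u (Q *m u) := pQ u.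
set y := Y *m u in Ety Eeta er ycol *.
set e := cdot u y in Ety Eeta er *.
have Ek : cdot u (Q *m u) = - ('Re t *+ 2) * e.
  rewrite -tt; have -> : cdot u (Q *m u) = - (t * e) - t^* * e by rewrite Eeta; ring.
  ring.
have [e0|en0] := eqVneq e 0.
  have q0 : Q *m u = 0.
    by apply: psd_kernel => //; rewrite Ek e0 mulr0.
  have y0 : y = 0.
    have Hu : (T + t^*%:M) *m y = 0.
      by rewrite mulmxDl Ety q0 oppr0 sub0r mul_scalar_mx addNr.
    have stc : 'Re t^* < 0 by rewrite Re_conj.
    have UT := trig_shift_unit tT sT stc.
    by rewrite -(mulKmx UT y) Hu mulmx0.
  apply: (IH k.+1 hk' Y Q) => // i j; rewrite ltnS leq_eqVlt => /orP[/eqP jk|]; last exact: Yk.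
  have -> : j = kk by apply: val_inj.
  by rewrite -ycol y0 mxE.
have ege : 0 <= e.
  have : e = cdot u (Q *m u) / - ('Re t *+ 2).
    by rewrite Ek mulrC mulKf // oppr_eq0 mulrn_eq0 /= lt_eqF.
  move=> ->; rewrite divr_ge0 // oppr_ge0 mulrn_wle0 // ltW //.
have egt : 0 < e by rewrite lt_def en0 ege.
set M := 1%:M - e^-1 *: (u *m adjmx y).
set Z := Y - e^-1 *: (y *m adjmx y).
have LZ : T *m Z + Z *m adjmx T = - (adjmx M *m Q *m M) by exact: (lyap_defl hY hQ L F1 en0).
have eir : (e^-1)^* = e^-1 by rewrite fmorphV /= er.
have hZ : herm Z.
  by rewrite /herm /Z adjmxB adjmxZ eir adjmxM adjmxK hY.
have pZ : psd Z.
  apply: (IH k.+1 hk' Z (adjmx M *m Q *m M)) => //.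
  - exact: herm_congr.
  - exact: psd_congr.
  move=> i j; rewrite ltnS leq_eqVlt => /orP[/eqP jk|jk].
    have -> : j = kk by apply: val_inj.
    have Zu : Z *m u = 0.
      rewrite /Z mulmxBl -scalemxAl -mulmxA [adjmx y *m u]mx11_scalar.
      rewrite -/(cdot y u) -cdotC er mul_mx_scalar scalerA mulVf // scale1r.
      by rewrite subrr.
    by have := congr1 (fun M : 'cV[C]_n => M i 0) Zu; rewrite /= -colE !mxE.
  have yj : (Y *m u) j 0 = 0 by rewrite ycol (herm_entry _ _ hY) Yk // conjC0.
  rewrite mxE in yj.
  by rewrite /Z !mxE Yk // big_ord1 !mxE yj conjC0 !mulr0 subrr.
move=> x.
have -> : Y = Z + e^-1 *: (y *m adjmx y) by rewrite /Z subrK.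
rewrite mulmxDl cdotDr -scalemxAl cdotZr cdot_outer.
rewrite addr_ge0 // mulr_ge0 ?invr_ge0 //.
by rewrite -(cdotC y x) mulrC mul_conjC_ge0.
Qed.


Lemma eigenvalue_unit (C : numClosedFieldType) n (A : 'M[C]_n) a :
  eigenvalue A a = ~~ (A - a%:M \in unitmx).
Proof. by rewrite /eigenvalue /eigenspace kermx_eq0 row_free_unit. Qed.

Lemma trig_diag_eigen (C : numClosedFieldType) n (T : 'M[C]_n) i :
  is_trig_mx T -> eigenvalue T (T i i).
Proof.
move=> tT; rewrite eigenvalue_unit unitmxE det_trig.
  rewrite unitfE negbK (bigD1 i) //= !mxE eqxx mulr1n subrr mul0r //.
apply/is_trig_mxP=> k j lkj; rewrite !mxE (is_trig_mxP tT) // sub0r.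
by rewrite (_ : (k == j) = false) ?oppr0 //; apply/negbTE; apply: contraTneq lkj => ->; rewrite ltnn.
Qed.

Lemma lyap_psd (C : numClosedFieldType) n (A Y Q : 'M[C]_n) :
  stable A -> herm Y -> herm Q -> psd Q -> A *m Y + Y *m adjmx A = - Q -> psd Y.
Proof.
move=> sA hY hQ pQ L.
case: n A Y Q sA hY hQ pQ L => [|n] A Y Q sA hY hQ pQ L.
  by move=> x; rewrite cdotE big_ord0.
have [P uP tT] := Schur A (ltn0Sn n).
rewrite /similar_to conjymx // -adjmxE in tT.
have PP : P *m adjmx P = 1%:M by rewrite adjmxE; apply/unitarymxP.
have PP' : adjmx P *m P = 1%:M by apply: mulmx1C.
have Pu : P \in unitmx by apply: unitarymx_unit.
have Pu' : adjmx P \in unitmx by have [] := mulmx1_unit PP.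
set T := P *m A *m adjmx P in tT.
have sT : forall i, 'Re (T i i) < 0.
  move=> i; apply: sA; have := trig_diag_eigen i tT.
  rewrite !eigenvalue_unit; apply: contra => HA.
  have -> : T - (T i i)%:M = P *m (A - (T i i)%:M) *m adjmx P.
    by rewrite mulmxBr mulmxBl -/T mul_mx_scalar -scalemxAl PP scalemx1.
  by rewrite !unitmx_mul Pu HA Pu'.
pose Y' := P *m Y *m adjmx P.
pose Q' := P *m Q *m adjmx P.
have hY' : herm Y' by have := herm_congr (adjmx P) hY; rewrite adjmxK.
have hQ' : herm Q' by have := herm_congr (adjmx P) hQ; rewrite adjmxK.
have pQ' : psd Q' by have := psd_congr (adjmx P) pQ; rewrite adjmxK.
have L' : T *m Y' + Y' *m adjmx T = - Q'.
  rewrite /T /Y' /Q' !adjmxM adjmxK.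
  have E1 : P *m A *m adjmx P *m (P *m Y *m adjmx P) = P *m (A *m Y) *m adjmx P.
    by rewrite !mulmxA -[P *m A *m adjmx P *m P]mulmxA PP' mulmx1.
  have E2 : P *m Y *m adjmx P *m (P *m (adjmx A *m adjmx P)) = P *m (Y *m adjmx A) *m adjmx P.
    by rewrite !mulmxA -[P *m Y *m adjmx P *m P]mulmxA PP' mulmx1.
  by rewrite E1 E2 -mulmxDl -mulmxDr L mulmxN mulNmx.
have pY' := lyap_tri tT sT (leq_addl 0 n.+1) hY' hQ' pQ' L' (fun i j (H : (j < 0)%N) => False_ind _ (notF H)).
move=> x.
have -> : Y = adjmx P *m Y' *m P.
  by rewrite /Y' !mulmxA PP' mul1mx -mulmxA PP' mulmx1.
rewrite -!mulmxA -cdot_mull. by have := pY' (P *m x); rewrite /Y' -!mulmxA.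
Qed.


Lemma mx_eq0_vec (C : numClosedFieldType) n (W : 'M[C]_n) :
  (forall x : 'cV[C]_n, W *m x = 0) -> W = 0.
Proof.
move=> H; apply/matrixP=> i j.
have := congr1 (fun M : 'cV[C]_n => M i 0) (H (delta_mx j 0)).
by rewrite /= -colE !mxE.
Qed.

Lemma lyap_herm (C : numClosedFieldType) n r (A X : 'M[C]_n) (B : 'M[C]_(n, r)) :
  stable A -> A *m X + X *m adjmx A = - (B *m adjmx B) -> herm X.
Proof.
move=> sA L.
have L' : A *m adjmx X + adjmx X *m adjmx A = - (B *m adjmx B).
  have := congr1 (@adjmx _ _ _) L.
  by rewrite adjmxD !adjmxM adjmxN adjmxM !adjmxK addrC.
pose W := 'i *: (X - adjmx X).
have LW : A *m W + W *m adjmx A = - 0.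
  rewrite /W -scalemxAr -scalemxAl -scalerDr mulmxBr mulmxBl.
  rewrite addrACA -opprD L L' subrr scaler0 oppr0 //.
have hW : herm W.
  by rewrite /herm /W adjmxZ conjCi adjmxB adjmxK scaleNr -scalerN opprB.
have hW' : herm (- W) by rewrite /herm adjmxN hW.
have h0 : herm (0 : 'M[C]_n) by rewrite /herm adjmx0.
have p0 : psd (0 : 'M[C]_n) by move=> x; rewrite mul0mx /cdot mulmx0 mxE.
have pW := lyap_psd sA hW h0 p0 LW.
have LW' : A *m (- W) + (- W) *m adjmx A = - 0.
  by rewrite mulmxN mulNmx -opprD LW !oppr0.
have pW' := lyap_psd sA hW' h0 p0 LW'.
have W0 : W = 0.
  apply: mx_eq0_vec => x; apply: psd_kernel => //.
  apply/eqP; rewrite eq_le pW andbT.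
  by have := pW' x; rewrite mulNmx cdotNr oppr_ge0.
move: W0; rewrite /W => /eqP; rewrite scaler_eq0 (negPf (neq0Ci C)) /= subr_eq0 => /eqP.
by move=> HX; rewrite /herm -HX.
Qed.

Lemma lyap_Xpsd (C : numClosedFieldType) n r (A X : 'M[C]_n) (B : 'M[C]_(n, r)) :
  stable A -> A *m X + X *m adjmx A = - (B *m adjmx B) -> psd X.
Proof.
move=> sA L; apply: (lyap_psd sA (lyap_herm sA L) _ _ L).
  by rewrite /herm adjmxM adjmxK.
by move=> x; rewrite -mulmxA -{1}(adjmxK B) -cdot_mull cdot_ge0.
Qed.


Lemma spectral_herm (C : numClosedFieldType) n (X : 'M[C]_n) : herm X ->
  exists P : 'M[C]_n, exists d : 'rV[C]_n,
    [/\ adjmx P *m P = 1%:M, P *m adjmx P = 1%:M & X = adjmx P *m diag_mx d *m P].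
Proof.
move=> hX.
have nX : X \is normalmx by apply/normalmxP; rewrite -adjmxE hX.
have uP := spectral_unitarymx X.
have PP : spectralmx X *m adjmx (spectralmx X) = 1%:M by rewrite adjmxE; apply/unitarymxP.
exists (spectralmx X), (spectral_diag X); split => //.
  exact: mulmx1C.
by rewrite adjmxE -invmx_unitary //; apply/orthomx_spectralP.
Qed.

Section Facts.
End Facts.

Lemma diag_delta (C : numClosedFieldType) n (d : 'rV[C]_n) (i : 'I_n) :
  diag_mx d *m (delta_mx i 0 : 'cV[C]_n) = d 0 i *: (delta_mx i 0 : 'cV[C]_n).
Proof.
rewrite mul_diag_mx; apply/matrixP=> j k; rewrite !mxE.
by case: (eqVneq j i) => [->|]; rewrite ?mulr1 ?mulr0 // andFb mulr0.
Qed.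

Lemma cdot_delta (C : numClosedFieldType) n (i : 'I_n) :
  cdot (delta_mx i 0 : 'cV[C]_n) ((delta_mx i 0 : 'cV[C]_n)) = 1.
Proof.
rewrite cdotE (bigD1 i) //= big1 ?addr0 => [|j /negbTE ji]; rewrite !mxE ?ji ?eqxx //=.
  by rewrite conjC1 mulr1.
by rewrite mulr0.
Qed.

Lemma spec_Xv (C : numClosedFieldType) n (X P : 'M[C]_n) (d : 'rV[C]_n) (i : 'I_n) :
  P *m adjmx P = 1%:M -> X = adjmx P *m diag_mx d *m P ->
  X *m (adjmx P *m (delta_mx i 0 : 'cV[C]_n)) = d 0 i *: (adjmx P *m (delta_mx i 0 : 'cV[C]_n)).
Proof.
move=> PP ->.
by rewrite -!mulmxA [P *m (adjmx P *m _)]mulmxA PP mul1mx diag_delta scalemxAr.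
Qed.

Lemma spec_vv (C : numClosedFieldType) n (P : 'M[C]_n) (i : 'I_n) :
  P *m adjmx P = 1%:M ->
  cdot (adjmx P *m (delta_mx i 0 : 'cV[C]_n)) (adjmx P *m (delta_mx i 0 : 'cV[C]_n)) = 1.
Proof. by move=> PP; rewrite cdot_mull adjmxK mulmxA PP mul1mx cdot_delta. Qed.

Lemma spec_d_ge0 (C : numClosedFieldType) n (X P : 'M[C]_n) (d : 'rV[C]_n) (i : 'I_n) :
  P *m adjmx P = 1%:M -> X = adjmx P *m diag_mx d *m P -> psd X -> 0 <= d 0 i.
Proof.
move=> PP EX pX; have := pX (adjmx P *m (delta_mx i 0 : 'cV[C]_n)).
by rewrite (spec_Xv _ PP EX) cdotZr spec_vv // mulr1.
Qed.

Lemma spec_sv (C : numClosedFieldType) n (X P : 'M[C]_n) (d : 'rV[C]_n) (i : 'I_n) :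
  P *m adjmx P = 1%:M -> X = adjmx P *m diag_mx d *m P -> psd X -> herm X ->
  singular_value X (d 0 i).
Proof.
move=> PP EX pX hX; have d0 := spec_d_ge0 i PP EX pX.
split => //; apply/eigenvalueP.
set v := adjmx P *m (delta_mx i 0 : 'cV[C]_n).
have Xv := spec_Xv i PP EX.
have wX : adjmx v *m X = d 0 i *: adjmx v.
  by rewrite -{1}hX -adjmxM Xv adjmxZ geC0_conj.
exists (adjmx v).
  by rewrite hX mulmxA wX -scalemxAl wX scalerA.
apply/eqP => v0; have := spec_vv i PP.
by rewrite /cdot -/v v0 mul0mx mxE => /eqP; rewrite eq_sym oner_eq0.
Qed.

Lemma spec_sv_inv (C : numClosedFieldType) n (X P : 'M[C]_n) (d : 'rV[C]_n) s :
  adjmx P *m P = 1%:M -> P *m adjmx P = 1%:M ->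
  X = adjmx P *m diag_mx d *m P -> psd X -> herm X ->
  singular_value X s -> exists i, s = d 0 i.
Proof.
move=> PP' PP EX pX hX [s0 /eigenvalueP [w Hw wn0]].
have XX : adjmx X *m X = adjmx P *m diag_mx d *m diag_mx d *m P.
  rewrite hX {1 2}EX -!mulmxA [P *m (adjmx P *m _)]mulmxA PP mul1mx //.
pose z := w *m adjmx P.
have Hz : z *m diag_mx d *m diag_mx d = s ^+ 2 *: z.
  have := congr1 (mulmx^~ (adjmx P)) Hw; rewrite /= XX -scalemxAl -/z.
  by rewrite !mulmxA -[_ *m P *m adjmx P]mulmxA PP mulmx1.
have zn0 : z != 0.
  apply: contraNneq wn0 => z0.
  by rewrite -[w]mulmx1 -PP' mulmxA -/z z0 mul0mx.
clearbody z.
case: (pickP (fun j => z 0 j != 0)) => [j Hj|H]; last first.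
  case/eqP: zn0; apply/matrixP=> a b; rewrite ord1 mxE; have := H b; rewrite /= => /negbFE /eqP //.
exists j.
have := congr1 (fun M : 'rV[C]_n => M 0 j) Hz; rewrite /= !mul_mx_diag !mxE.
move=> /eqP; rewrite -mulrA mulrC -subr_eq0 -mulrBl mulf_eq0 (negPf Hj) orbF subr_eq0.
rewrite -expr2 eqrXn2 // ?(spec_d_ge0 j PP EX pX) // => /eqP ->; by [].
Qed.


Lemma vnormE (C : numClosedFieldType) n (u : 'cV[C]_n) : vnorm u = sqrtC (cdot u u).
Proof. by rewrite /vnorm cdotE; congr sqrtC; apply: eq_bigr => i _; rewrite normCK mulrC. Qed.

Lemma vnorm_unit (C : numClosedFieldType) n (u : 'cV[C]_n) : cdot u u = 1 -> vnorm u = 1.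
Proof. by move=> H; rewrite vnormE H sqrtC1. Qed.

Lemma unit_vnorm (C : numClosedFieldType) n (u : 'cV[C]_n) : vnorm u = 1 -> cdot u u = 1.
Proof. by move=> H; rewrite -vnorm_cdot H expr1n. Qed.

Lemma formE (C : numClosedFieldType) n (A : 'M[C]_n) x :
  (adjmx x *m A *m x) 0 0 = cdot x (A *m x).
Proof. by rewrite -mulmxA. Qed.

Lemma sq_le (C : numClosedFieldType) (a b : C) : 0 <= a -> 0 <= b ->
  a ^+ 2 <= b * a -> a <= b.
Proof.
move=> a0 b0 H.
have [a00|an0] := eqVneq a 0; first by rewrite a00.
have apos : 0 < a by rewrite lt_def an0 a0.
by rewrite -(ler_pM2r apos) -expr2.
Qed.

Lemma lower_bound (C : numClosedFieldType) n r (A X : 'M[C]_n) (B : 'M[C]_(n, r))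
  (v : 'cV[C]_n) (s1 normB w : C) :
  herm X -> X *m v = s1 *: v -> 0 < s1 -> cdot v v = 1 ->
  A *m X + X *m adjmx A = - (B *m adjmx B) ->
  is_opnorm B normB -> is_num_abscissa A w ->
  - (normB ^+ 2 / (2 * s1)) <= w.
Proof.
move=> hX Xv s1p vv L [nB0 [nB _]] [Hw _].
set z := cdot v (A *m v).
set y := adjmx B *m v.
set N := cdot y y.
have s1r : s1^* = s1 by apply: geC0_conj; apply: ltW.
have E1 : s1 * (z + z^*) = - N.
  have := congr1 (fun M => cdot v (M *m v)) L; rewrite /=.
  rewrite mulmxDl cdotDr -!mulmxA Xv -scalemxAr cdotZr cdot_herm // Xv cdotZl s1r.
  rewrite mulNmx cdotNr -cdot_mull -/y -/N.
  rewrite -(mulmxA B) -{1}(adjmxK B) -cdot_mull -/y -/N -(cdotC v (A *m v)) -/z mulrDr.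
  by move=> ->.
have Rez : 'Re z = - (N / (2 * s1)).
  rewrite ReE; apply: (mulfI (_ : s1 != 0)); first by rewrite gt_eqF.
  rewrite mulrA E1; field; rewrite gt_eqF //.
have N0 : 0 <= N := cdot_ge0 y.
have y0 : 0 <= vnorm y := vnorm_ge0 y.
have Nle : N <= normB ^+ 2.
  have H1 : N <= vnorm v * vnorm (B *m y).
    have : N = cdot v (B *m y) by rewrite /N -{1}[v]/v /y cdot_mull adjmxK.
    move=> EN; rewrite -[N]ger0_norm // {1}EN; exact: cauchy_schwarz.
  rewrite vnorm_unit // mul1r in H1.
  have H2 := le_trans H1 (nB y).
  rewrite /N -vnorm_cdot in H2.
  have H3 := sq_le y0 nB0 H2.
  by rewrite /N -vnorm_cdot !expr2 ler_pM.
apply: le_trans (Hw v (vnorm_unit vv)); rewrite formE -/z Rez lerN2.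
by rewrite ler_pM2r // invr_gt0 mulr_gt0.
Qed.

Lemma cdot_unit (C : numClosedFieldType) n (P : 'M[C]_n) y :
  P *m adjmx P = 1%:M -> cdot (adjmx P *m y) (adjmx P *m y) = cdot y y.
Proof. by move=> PP; rewrite cdot_mull adjmxK mulmxA PP mul1mx. Qed.

Lemma diag_bound (C : numClosedFieldType) n (d : 'rV[C]_n) (k : C) (y : 'cV[C]_n) :
  (forall i, (d 0 i)^* = d 0 i) -> (forall i, d 0 i ^+ 2 <= k ^+ 2) ->
  cdot (diag_mx d *m y) (diag_mx d *m y) <= k ^+ 2 * cdot y y.
Proof.
move=> dr dk; rewrite !cdotE mulr_sumr; apply: ler_sum => i _.
rewrite mul_diag_mx !mxE rmorphM /= dr.
rewrite mulrACA -expr2 (mulrC (_ ^*)) ler_wpM2r //.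
by rewrite mul_conjC_ge0.
Qed.

Lemma upper_bound (C : numClosedFieldType) n r (A X : 'M[C]_n) (B : 'M[C]_(n, r))
  (P : 'M[C]_n) (d : 'rV[C]_n) (s1 sn normA w : C) :
  adjmx P *m P = 1%:M -> P *m adjmx P = 1%:M -> X = adjmx P *m diag_mx d *m P ->
  herm X -> (forall i, sn <= d 0 i /\ d 0 i <= s1) -> 0 < sn -> sn <= s1 ->
  A *m X + X *m adjmx A = - (B *m adjmx B) ->
  is_opnorm A normA -> is_num_abscissa A w ->
  w <= (s1 - sn) / (s1 + sn) * normA.
Proof.
move=> PP' PP EX hX dB snp sn1 L [nA0 [nA _]] [_ [x xn <-]].
have xx := unit_vnorm xn.
set c := (s1 + sn) / 2.
set k := (s1 - sn) / (s1 + sn).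
have s1p : 0 < s1 := lt_le_trans snp sn1.
have ssp : 0 < s1 + sn by rewrite addr_gt0.
have cp : 0 < c by rewrite divr_gt0.
have cr : c^* = c by apply: geC0_conj; apply: ltW.
have k0 : 0 <= k by rewrite divr_ge0 ?subr_ge0 // ltW.
set E := c^-1 *: X - 1%:M.
pose d' := \row_i (c^-1 * d 0 i - 1).
have EE : E = adjmx P *m diag_mx d' *m P.
  have -> : diag_mx d' = c^-1 *: diag_mx d - 1%:M.
    apply/matrixP=> i j; rewrite !mxE.
    by case: (eqVneq i j) => [->|]; rewrite ?mulr1n ?mulr0n ?mulr0 ?subr0.
  rewrite mulmxBr mulmxBl mulmx1 PP' -scalemxAr -scalemxAl -EX //.
have d'r : forall i, (d' 0 i)^* = d' 0 i.
  move=> i; rewrite mxE rmorphB /= rmorph1 rmorphM /= fmorphV /= cr.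
  by rewrite geC0_conj // (le_trans (ltW snp)) //; case: (dB i).
have d'k : forall i, d' 0 i ^+ 2 <= k ^+ 2.
  move=> i; rewrite mxE -subr_ge0; case: (dB i) => H1 H2.
  have -> : k ^+ 2 - (c^-1 * d 0 i - 1) ^+ 2
      = 4%:R * (s1 - d 0 i) * (d 0 i - sn) / (s1 + sn) ^+ 2.
    rewrite /k /c; field; by rewrite gt_eqF.
  apply: divr_ge0; last by rewrite exprn_ge0 // ltW.
  by rewrite !mulr_ge0 ?subr_ge0 // ler0n.
have Ex : vnorm (E *m x) <= k.
  rewrite vnormE EE -mulmxA -mulmxA cdot_unit //.
  have H := diag_bound (P *m x) d'r d'k.
  have Px : cdot (P *m x) (P *m x) = 1 by rewrite cdot_mull mulmxA PP' mul1mx.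
  rewrite Px mulr1 in H.
  rewrite -mulmxA -(sqrCK k0) ler_sqrtC ?nnegrE ?exprn_ge0 ?cdot_ge0 //.
have Xx : X *m x = c *: (x + E *m x).
  by rewrite /E mulmxBl mul1mx -scalemxAl (addrC x) subrK scalerA mulfV ?gt_eqF // scale1r.
set z := cdot x (A *m x).
set q := cdot x (A *m (E *m x)).
set p := cdot x (A *m (X *m x)).
have Ep : p = c * (z + q) by rewrite /p Xx -scalemxAr cdotZr mulmxDr cdotDr.
set N := cdot (adjmx B *m x) (adjmx B *m x).
have E1 : p + p^* = - N.
  have := congr1 (fun M => cdot x (M *m x)) L; rewrite /=.
  rewrite mulmxDl cdotDr -!mulmxA -/p cdot_herm // -cdot_mull mulmxA.
  rewrite -(cdotC x (A *m X *m x)) -mulmxA -/p.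
  rewrite mulNmx cdotNr -(mulmxA B) -{1}(adjmxK B) -cdot_mull -/N.
  by move=> ->.
have Rezq : 'Re z + 'Re q = - (N / (2 * c)).
  rewrite -raddfD /= ReE; apply: (mulfI (_ : c != 0)); first by rewrite gt_eqF.
  have : c * ((z + q) + (z + q)^*) = - N by rewrite -E1 Ep rmorphM /= cr mulrDr.
  move=> H; rewrite mulrA H; field; rewrite gt_eqF //.
have N0 : 0 <= N := cdot_ge0 _.
have H0 : 'Re z + 'Re q <= 0.
  by rewrite Rezq oppr_le0 divr_ge0 // mulr_ge0 // ltW.
have H1 : 'Re z <= - 'Re q.
  by have := lerD H0 (lexx (- 'Re q)); rewrite addrK add0r.
have H2 : - 'Re q <= `|q|.
  by have := (leif_Re_Creal (- q)).1; rewrite raddfN normrN.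
have H3 : `|q| <= normA * k.
  apply: le_trans (cauchy_schwarz _ _) _; rewrite xn mul1r.
  apply: le_trans (nA _) _; by rewrite ler_wpM2l.
rewrite formE -/z mulrC.
exact: le_trans H1 (le_trans H2 H3).
Qed.

Unset Implicit Arguments.
Theorem corollary5p2 (C : numClosedFieldType) (n r : nat)
    (A : 'M[C]_n) (B : 'M[C]_(n, r)) (X : 'M[C]_n)
    (s1 sn normA normB w : C) :
  stable A ->
  controllable A B ->
  A *m X + X *m adjmx A = - (B *m adjmx B) ->
  (* s1 is the largest and sn the smallest singular value of X, sn > 0 *)
  singular_value X s1 -> singular_value X sn ->
  (forall s, singular_value X s -> sn <= s /\ s <= s1) ->
  0 < sn ->
  is_opnorm A normA -> is_opnorm B normB ->
  is_num_abscissa A w ->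
  - (normB ^+ 2 / (2 * s1)) <= w /\ w <= (s1 - sn) / (s1 + sn) * normA.
Proof.
move=> sA _ L sv1 _ hsv snp opA opB abs.
have hX := lyap_herm sA L.
have pX := lyap_Xpsd sA L.
have [P [d [PP' PP EX]]] := spectral_herm hX.
have dB : forall i, sn <= d 0 i /\ d 0 i <= s1.
  by move=> i; apply: hsv; apply: (spec_sv i PP EX pX hX).
have sn1 : sn <= s1 by case: (hsv s1 sv1).
have [j Ej] := spec_sv_inv PP' PP EX pX hX sv1.
have Xv := spec_Xv j PP EX; rewrite -Ej in Xv.
have vv := spec_vv j PP.
have s1p : 0 < s1 := lt_le_trans snp sn1.
split.
  exact: (lower_bound hX Xv s1p vv L opB abs).
exact: (upper_bound PP' PP EX hX dB snp sn1 L opA abs).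
Qed.
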